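(* Let $a,x,y$ be integers. (i) For $\beta=[1,3]^{3a}\sigma_1^x\sigma_2^y$, $$V^*_{\widehat\beta}=\epsilon_{x+y}(1+t^2)+t^{3a}\,\frac{t^{x+y+2}+\epsilon_x G t^{y+1}+\epsilon_y G t^{x+1}+\epsilon_{x+y}t^2}{(1+t)^2} =\epsilon_{x+y}(1+t^2)+t^{3a+2}\{\epsilon_{x+y+1}+\epsilon_y A_{x-1}+\epsilon_x A_{y-1}+t^2A_{x-1}A_{y-1}\}.$$ (ii) For $\beta=[1,3]^{3a+1}\sigma_1^x\sigma_2^y$, one has $\beta$ conjugate to $[1,3]^{3a}\sigma_1^{x+y+1}\sigma_2$, and $$V^*_{\widehat\beta}=\epsilon_{x+y}(1+t^2)-t^{3a+3}\,\frac{t^{x+y-1}+\epsilon_{x+y}}{1+t}=\epsilon_{x+y}(1+t^2)-t^{3a+3}A_{x+y-1}.$$ (iii) For $\beta=[1,3]^{3a+2}\sigma_1^x\sigma_2^y$, one has $\beta$ conjugate to $[1,3]^{3a+3}\sigma_1^{x-1}\sigma_2^{y-1}$, and $$V^*_{\widehat\beta}=\epsilon_{x+y}(1+t^2)+t^{3a+3}\,\frac{t^{x+y}+\epsilon_{x-1}Gt^{y}+\epsilon_{y-1}Gt^{x}+\epsilon_{x+y}t^2}{(1+t)^2}.$$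
   Context: $B_3$ is the 3-strand braid group with generators $\sigma_1,\sigma_2$; $\widehat\beta$ is the closure; $[1,3]=\sigma_1\sigma_2$; $w(\beta)$ is the exponent sum of $\beta$. $V_L(t)$ is the Jones polynomial (unknot $=1$, $t^{-1}V_{L_+}-tV_{L_-}=(t^{1/2}-t^{-1/2})V_{L_0}$, $\sigma_i$ a positive crossing). For $\beta\in B_3$, $V^*_{\widehat\beta}$ is defined by $V_{\widehat\beta}(t)=t^{(w(\beta)-2)/2}V^*_{\widehat\beta}(t)$. Notation: $\epsilon_x=(-1)^x$, $G=1+t+t^2$, and for any integer $w$, $A_w=A_w(t)=(t^w+\epsilon_{w-1})/(t+1)$ (a Laurent polynomial; for $w>0$, $A_w=\sum_{j=0}^{w-1}\epsilon_j t^{w-1-j}$, and $A_0=0$). *)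

(* Defs.v *)
From mathcomp Require Import all_boot all_order all_algebra.
Set Implicit Arguments. Unset Strict Implicit. Unset Printing Implicit Defensive.
Import Order.TTheory GRing.Theory Num.Theory.
Local Open Scope ring_scope.

Inductive gen3 := s1 | s2.

(* a letter is a generator with a sign: (g, true) = sigma_g, (g, false) = sigma_g^-1 *)
Definition letter := (gen3 * bool)%type.
Definition word := seq letter.

Definition winv (w : word) : word := [seq (l.1, ~~ l.2) | l <- rev w].

(* equality in B_3 = < s1, s2 | s1 s2 s1 = s2 s1 s2 > : the congruence on words
   generated by free cancellation and the braid relation *)
Inductive beq : word -> word -> Prop :=
| beq_refl w : beq w w
| beq_sym u v : beq u v -> beq v u
| beq_trans u v w : beq u v -> beq v w -> beq u w
| beq_ctx p q u v : beq u v -> beq (p ++ u ++ q) (p ++ v ++ q)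
| beq_cancel g b : beq [:: (g, b); (g, ~~ b)] [::]
| beq_braid : beq [:: (s1, true); (s2, true); (s1, true)]
                  [:: (s2, true); (s1, true); (s2, true)].

Definition bconj (u v : word) : Prop := exists g : word, beq (g ++ u ++ winv g) v.

Definition wpow (w : word) (n : int) : word :=
  match n with
  | Posz k => flatten (nseq k w)
  | Negz k => flatten (nseq k.+1 (winv w))
  end.
Definition gpow (g : gen3) (n : int) : word := wpow [:: (g, true)] n.

Definition delta13 : word := [:: (s1, true); (s2, true)].

Definition beta (k x y : int) : word := wpow delta13 k ++ gpow s1 x ++ gpow s2 y.

Definition writhe (w : word) : int := \sum_(l <- w) (if l.2 then 1 else -1).

(** * Kauffman bracket of the closure (state sum), via Temperley-Lieb diagrams
      on 3 strands: 1, e1, e2, e1e2, e2e1 *)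
Inductive tl3 := T1 | Te1 | Te2 | Te12 | Te21.

(* right multiplication of a diagram by e_g: (number of closed loops created, result) *)
Definition tl_mul (D : tl3) (g : gen3) : nat * tl3 :=
  match g, D with
  | s1, T1 => (0, Te1)   | s1, Te1 => (1, Te1)  | s1, Te2 => (0, Te21)
  | s1, Te12 => (0, Te1) | s1, Te21 => (1, Te21)
  | s2, T1 => (0, Te2)   | s2, Te1 => (0, Te12) | s2, Te2 => (1, Te2)
  | s2, Te12 => (1, Te12) | s2, Te21 => (0, Te2)
  end%N.

Definition tl_closure_loops (D : tl3) : nat :=
  match D with T1 => 3 | Te1 => 2 | Te2 => 2 | Te12 => 1 | Te21 => 1 end%N.

(* all states (choices of smoothing, true = A-smoothing) of n crossings *)
Fixpoint all_states (n : nat) : seq (seq bool) :=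
  match n with
  | 0 => [:: [::]]
  | n.+1 => [seq b :: s | b <- [:: true; false], s <- all_states n]
  end.

(* A-smoothing of a positive crossing sigma_g is the identity, its B-smoothing is e_g;
   for a negative crossing it is the opposite. *)
Fixpoint resolve (w : word) (s : seq bool) (acc : nat * tl3) : nat * tl3 :=
  match w, s with
  | l :: w', c :: s' =>
      let acc' := if c != l.2 then
                    let p := tl_mul acc.2 l.1 in (acc.1 + p.1, p.2)%N
                  else acc in
      resolve w' s' acc'
  | _, _ => acc
  end.

Definition state_loops (w : word) (s : seq bool) : nat :=
  let p := resolve w s (0%N, T1) in (p.1 + tl_closure_loops p.2)%N.

Definition state_exp (s : seq bool) : int := \sum_(c <- s) (if c then 1 else -1).

(* Kauffman bracket <closure of w>, normalized with <O> = 1, d = -A^2 - A^-2 *)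
Definition bracket (R : unitRingType) (A : R) (w : word) : R :=
  \sum_(s <- all_states (size w))
     A ^ state_exp s * (- A ^+ 2 - A ^- 2) ^+ (state_loops w s).-1.

(* Jones polynomial of the closure, written in the variable A with t = A^-4
   (so t^(1/2) = A^-2):  V = (-A^3)^(-w) <D>. *)
Definition jonesA (R : unitRingType) (A : R) (w : word) : R :=
  (- A ^+ 3) ^ (- writhe w) * bracket A w.

(* V*: V = t^((w-2)/2) V*, i.e. V* = (t^(1/2))^(-(w-2)) V = A^(2(w-2)) V *)
Definition Vstar (R : unitRingType) (A : R) (w : word) : R :=
  A ^ (2 * (writhe w - 2)) * jonesA A w.

Definition eps (R : unitRingType) (x : int) : R := (-1) ^ x.
Definition Gt (R : ringType) (t : R) : R := 1 + t + t ^+ 2.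
Definition Aw (R : fieldType) (t : R) (w : int) : R := (t ^ w + eps R (w - 1)) / (t + 1).

(* Main.v *)
Require Import Defs.
From mathcomp Require Import all_boot all_order all_algebra.
From mathcomp Require Import ring zify.
Import Order.TTheory GRing.Theory Num.Theory.
Local Open Scope ring_scope.
Set Implicit Arguments. Unset Strict Implicit.

Record vec (R : Type) := V5 { v1 : R; ve1 : R; ve2 : R; ve12 : R; ve21 : R }.

Definition dd (R : unitRingType) (A : R) : R := - A ^+ 2 - A ^- 2.

Definition vadd (R : ringType) (u v : vec R) : vec R :=
  V5 (v1 u + v1 v) (ve1 u + ve1 v) (ve2 u + ve2 v) (ve12 u + ve12 v) (ve21 u + ve21 v).
Definition vsc (R : ringType) (c : R) (u : vec R) : vec R :=
  V5 (c * v1 u) (c * ve1 u) (c * ve2 u) (c * ve12 u) (c * ve21 u).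

Definition Eg (R : unitRingType) (A : R) (g : gen3) (v : vec R) : vec R :=
  let d := dd A in
  match g with
  | s1 => V5 0 (v1 v + d * ve1 v + ve12 v) 0 0 (ve2 v + d * ve21 v)
  | s2 => V5 0 0 (v1 v + d * ve2 v + ve21 v) (ve1 v + d * ve12 v) 0
  end.

Definition step (R : unitRingType) (A : R) (l : letter) (v : vec R) : vec R :=
  if l.2 then vadd (vsc A v) (vsc A^-1 (Eg A l.1 v))
  else vadd (vsc A^-1 v) (vsc A (Eg A l.1 v)).

Definition run (R : unitRingType) (A : R) (w : word) (v : vec R) : vec R :=
  foldl (fun v l => step A l v) v w.

Definition clos (R : unitRingType) (A : R) (v : vec R) : R :=
  let d := dd A in v1 v * d ^+ 2 + ve1 v * d + ve2 v * d + ve12 v + ve21 v.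

Definition delt (R : ringType) (D : tl3) : vec R :=
  match D with
  | T1 => V5 1 0 0 0 0 | Te1 => V5 0 1 0 0 0 | Te2 => V5 0 0 1 0 0
  | Te12 => V5 0 0 0 1 0 | Te21 => V5 0 0 0 0 1 end.

Lemma step_add (R : comUnitRingType) (A : R) l u v :
  step A l (vadd u v) = vadd (step A l u) (step A l v).
Proof.
case: l => [[] []]; case: u => ? ? ? ? ?; case: v => ? ? ? ? ?;
rewrite /step /vadd /vsc /Eg /=; congr V5; ring.
Qed.

Lemma step_sc (R : comUnitRingType) (A : R) l c u :
  step A l (vsc c u) = vsc c (step A l u).
Proof.
case: l => [[] []]; case: u => ? ? ? ? ?;
rewrite /step /vadd /vsc /Eg /=; congr V5; ring.
Qed.

Lemma run_add (R : comUnitRingType) (A : R) w u v :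
  run A w (vadd u v) = vadd (run A w u) (run A w v).
Proof. elim: w u v => [|l w IH] u v //=. by rewrite step_add IH. Qed.

Lemma run_sc (R : comUnitRingType) (A : R) w c u :
  run A w (vsc c u) = vsc c (run A w u).
Proof. elim: w u => [|l w IH] u //=. by rewrite step_sc IH. Qed.

Lemma clos_add (R : comUnitRingType) (A : R) u v :
  clos A (vadd u v) = clos A u + clos A v.
Proof. rewrite /clos /=; ring. Qed.

Lemma clos_sc (R : comUnitRingType) (A : R) c u :
  clos A (vsc c u) = c * clos A u.
Proof. rewrite /clos /=; ring. Qed.

Lemma state_exp_cons b s : state_exp (b :: s) = (if b then 1 else -1) + state_exp s.
Proof. by rewrite /state_exp big_cons. Qed.

Lemma Eg_delt (R : comUnitRingType) (A : R) g D c :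
  Eg A g (vsc c (delt R D)) = vsc (c * dd A ^+ (tl_mul D g).1) (delt R (tl_mul D g).2).
Proof.
case: g; case: D; rewrite /Eg /vsc /=; congr V5; ring.
Qed.

Lemma bracket_gen (R : fieldType) (A : R) (w : word) (acc : nat * tl3) :
  A != 0 ->
  \sum_(s <- all_states (size w)) A ^ state_exp s *
     dd A ^+ ((resolve w s acc).1 + tl_closure_loops (resolve w s acc).2).-1
  = clos A (run A w (vsc (dd A ^+ acc.1) (delt R acc.2))).
Proof.
move=> A0.
elim: w acc => [|l w IH] [n D].
  rewrite /= big_seq1 /state_exp big_nil expr0z mul1r /=.
  case: D; rewrite /clos /vsc /= addnS /= ?addn0 ?exprD; ring.
rewrite /= cats0 big_cat !big_map /=.
have eT : forall s, A ^ state_exp (true :: s) = A * A ^ state_exp s.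
  by move=> s; rewrite state_exp_cons expfzDr // expr1z.
have eF : forall s, A ^ state_exp (false :: s) = A^-1 * A ^ state_exp s.
  by move=> s; rewrite state_exp_cons expfzDr // exprN1.
under eq_bigr do rewrite eT -mulrA.
under [X in _ + X]eq_bigr do rewrite eF -mulrA.
rewrite -!big_distrr /=.
case: l => g b; case: b => /=.
- rewrite (IH (n, D)) (IH (n + (tl_mul D g).1, (tl_mul D g).2))%N.
  rewrite /step /= run_add !run_sc clos_add !clos_sc Eg_delt -exprD.
  by rewrite run_sc clos_sc.
- rewrite (IH (n, D)) (IH (n + (tl_mul D g).1, (tl_mul D g).2))%N.
  rewrite /step /= run_add !run_sc clos_add !clos_sc Eg_delt -exprD.
  rewrite run_sc clos_sc; ring.
Qed.

Lemma bracket_run (R : fieldType) (A : R) (w : word) :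
  A != 0 -> bracket A w = clos A (run A w (delt R T1)).
Proof.
move=> A0; rewrite /bracket /state_loops.
have := bracket_gen w (0%N, T1) A0; rewrite /= expr0.
have -> : vsc 1 (delt R T1) = delt R T1 by rewrite /vsc /=; congr V5; ring.
move=> <-; apply: eq_bigr => s _; congr (_ * _); rewrite /dd //.
Qed.

Definition cz (R : unitRingType) (A : R) (x : int) : R :=
  ((- A ^- 3) ^ x - A ^ x) / dd A.
Definition Pg (R : unitRingType) (A : R) (g : gen3) (x : int) (v : vec R) : vec R :=
  vadd (vsc (A ^ x) v) (vsc (cz A x) (Eg A g v)).

Ltac fld A0 h4 := rewrite /dd; field; rewrite ?A0 ?h4 //.

Lemma run_nseqT (R : fieldType) (A : R) g n v : A != 0 -> - A ^+ 2 * A ^+ 2 - 1 != 0 ->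
  run A (nseq n (g, true)) v =
  vadd (vsc (A ^+ n) v) (vsc (((- A ^- 3) ^+ n - A ^+ n) / dd A) (Eg A g v)).
Proof.
move=> A0 h4; elim: n v => [|n IH] v /=.
  case: v => ? ? ? ? ?; rewrite /vadd /vsc /= !expr0 subrr mul0r; case: g => /=; congr V5; ring.
rewrite IH {IH}; case: v => ? ? ? ? ?; rewrite /step /vadd /vsc /=.
rewrite [(- A ^- 3) ^+ n.+1]exprS [A ^+ n.+1]exprS.
set P : R := (- A ^- 3) ^+ n; set Q : R := A ^+ n; clearbody P Q.
case: g => /=; congr V5; fld A0 h4.
Qed.

Lemma run_nseqF (R : fieldType) (A : R) g n v : A != 0 -> - A ^+ 2 * A ^+ 2 - 1 != 0 ->
  run A (nseq n (g, false)) v =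
  vadd (vsc (A ^+ n)^-1 v) (vsc ((((- A ^- 3) ^+ n)^-1 - (A ^+ n)^-1) / dd A) (Eg A g v)).
Proof.
move=> A0 h4; elim: n v => [|n IH] v /=.
  case: v => ? ? ? ? ?; rewrite /vadd /vsc /= !expr0 invr1 subrr mul0r; case: g => /=; congr V5; ring.
rewrite IH {IH}; case: v => ? ? ? ? ?; rewrite /step /vadd /vsc /=.
rewrite [(- A ^- 3) ^+ n.+1]exprS [A ^+ n.+1]exprS.
have hP : (- A ^- 3) ^+ n != 0 by rewrite expf_neq0 // oppr_eq0 invr_eq0 expf_neq0.
have hQ : A ^+ n != 0 by rewrite expf_neq0.
set P : R := (- A ^- 3) ^+ n in hP *; set Q : R := A ^+ n in hQ *; clearbody P Q.
case: g => /=; congr V5; rewrite /dd; field; rewrite ?A0 ?h4 ?hP ?hQ ?oppr_eq0 ?oner_eq0 //.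
Qed.

Lemma flatten_nseq1 (T : Type) n (l : T) : flatten (nseq n [:: l]) = nseq n l.
Proof. by elim: n => //= n ->. Qed.

Lemma run_gpow (R : fieldType) (A : R) g x v : A != 0 -> - A ^+ 2 * A ^+ 2 - 1 != 0 ->
  run A (gpow g x) v = Pg A g x v.
Proof.
move=> A0 h4; case: x => n; rewrite /gpow /wpow.
  by rewrite flatten_nseq1 run_nseqT.
rewrite /= (_ : winv [:: (g, true)] = [:: (g, false)]) // flatten_nseq1.
rewrite (_ : run A (nseq n (g,false)) (step A (g,false) v) = run A (nseq n.+1 (g,false)) v) //.
by rewrite run_nseqF.
Qed.

Definition D3 : word := delta13 ++ delta13 ++ delta13.
Definition Di3 : word := winv delta13 ++ winv delta13 ++ winv delta13.

Lemma T_expl (R : fieldType) (A : R) v : A != 0 ->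
  run A delta13 v = V5 (A ^+ 2 * v1 v) (v1 v - A ^- 2 * ve1 v + ve12 v) (v1 v - A ^- 4 * ve21 v)
                       (A ^- 2 * v1 v - A ^- 4 * ve1 v) (ve2 v - A ^- 2 * ve21 v).
Proof.
move=> A0; case: v => ? ? ? ? ?; rewrite /run /= /step /vadd /vsc /=; congr V5; rewrite /dd; field; by rewrite ?A0.
Qed.

Lemma Ti_expl (R : fieldType) (A : R) v : A != 0 ->
  run A (winv delta13) v = V5 (A ^- 2 * v1 v) (v1 v - A ^+ 4 * ve12 v) (v1 v - A ^+ 2 * ve2 v + ve21 v)
                       (ve1 v - A ^+ 2 * ve12 v) (A ^+ 2 * v1 v - A ^+ 4 * ve2 v).
Proof.
move=> A0; case: v => ? ? ? ? ?; rewrite /run /= /step /vadd /vsc /=; congr V5; rewrite /dd; field; by rewrite ?A0.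
Qed.

Lemma TiT (R : fieldType) (A : R) v : A != 0 ->
  run A (winv delta13) (run A delta13 v) = v.
Proof.
move=> A0; rewrite Ti_expl // T_expl //; case: v => ? ? ? ? ? /=; congr V5; field; by rewrite ?A0.
Qed.

Lemma Z_expl (R : fieldType) (A : R) v : A != 0 ->
  run A D3 v = V5 (A ^+ 6 * v1 v) (A ^- 6 * ve1 v + (A ^+ 4 - A ^- 4) * v1 v)
                  (A ^- 6 * ve2 v + (A ^+ 4 - A ^- 4) * v1 v)
                  (A ^- 6 * ve12 v + (A ^+ 2 - A ^- 2) * v1 v)
                  (A ^- 6 * ve21 v + (A ^+ 2 - A ^- 2) * v1 v).
Proof.
move=> A0; rewrite /D3 /run !foldl_cat -!/(run A delta13 _) !T_expl //.
case: v => ? ? ? ? ? /=; congr V5; field; by rewrite ?A0.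
Qed.

Lemma Zi_expl (R : fieldType) (A : R) v : A != 0 ->
  run A Di3 v = V5 (A ^- 6 * v1 v) (A ^+ 6 * ve1 v + (A ^- 4 - A ^+ 4) * v1 v)
                  (A ^+ 6 * ve2 v + (A ^- 4 - A ^+ 4) * v1 v)
                  (A ^+ 6 * ve12 v + (A ^- 2 - A ^+ 2) * v1 v)
                  (A ^+ 6 * ve21 v + (A ^- 2 - A ^+ 2) * v1 v).
Proof.
move=> A0; rewrite /Di3 /run !foldl_cat -!/(run A (winv delta13) _) !Ti_expl //.
case: v => ? ? ? ? ? /=; congr V5; field; by rewrite ?A0.
Qed.

Lemma Z_E (R : fieldType) (A : R) g v : A != 0 ->
  run A D3 (Eg A g v) = Eg A g (run A D3 v).
Proof.
move=> A0; rewrite !Z_expl //; case: v => ? ? ? ? ?; case: g; rewrite /Eg /=; congr V5; rewrite /dd; field; by rewrite ?A0.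
Qed.

Lemma Zi_E (R : fieldType) (A : R) g v : A != 0 ->
  run A Di3 (Eg A g v) = Eg A g (run A Di3 v).
Proof.
move=> A0; rewrite !Zi_expl //; case: v => ? ? ? ? ?; case: g; rewrite /Eg /=; congr V5; rewrite /dd; field; by rewrite ?A0.
Qed.

Definition kap (R : unitRingType) (A : R) : R := dd A ^+ 2 - 2.

Lemma clos_Z (R : fieldType) (A : R) u : A != 0 ->
  clos A (run A D3 u) = A ^+ 6 * kap A * v1 u + A ^- 6 * (clos A u - kap A * v1 u).
Proof.
move=> A0; rewrite Z_expl //; case: u => ? ? ? ? ?; rewrite /clos /kap /dd /=; field; by rewrite ?A0.
Qed.

Lemma clos_Zi (R : fieldType) (A : R) u : A != 0 ->
  clos A (run A Di3 u) = A ^- 6 * kap A * v1 u + A ^+ 6 * (clos A u - kap A * v1 u).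
Proof.
move=> A0; rewrite Zi_expl //; case: u => ? ? ? ? ?; rewrite /clos /kap /dd /=; field; by rewrite ?A0.
Qed.

Lemma v1_Z (R : fieldType) (A : R) u : A != 0 -> v1 (run A D3 u) = A ^+ 6 * v1 u.
Proof. by move=> A0; rewrite Z_expl. Qed.

Lemma v1_Zi (R : fieldType) (A : R) u : A != 0 -> v1 (run A Di3 u) = A ^- 6 * v1 u.
Proof. by move=> A0; rewrite Zi_expl. Qed.

Lemma run_cat (R : unitRingType) (A : R) u w v : run A (u ++ w) v = run A w (run A u v).
Proof. by rewrite /run foldl_cat. Qed.

Lemma run_flat (R : unitRingType) (A : R) n w v :
  run A (flatten (nseq n w)) v = iter n (run A w) v.
Proof. elim: n v => [|n IH] v //=. by rewrite run_cat IH -iterSr. Qed.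

Definition Zp (R : unitRingType) (A : R) (a : int) (u : vec R) : vec R :=
  match a with
  | Posz n => iter n (run A D3) u
  | Negz n => iter n.+1 (run A Di3) u
  end.

Lemma iter3 (T : Type) (f : T -> T) n v : iter (3 * n) f v = iter n (fun w => f (f (f w))) v.
Proof. elim: n v => [|n IH] v //. by rewrite mulnS iterD IH iterS. Qed.

Lemma iter_TiT (R : fieldType) (A : R) r v : A != 0 ->
  iter r (run A (winv delta13)) (iter r (run A delta13) v) = v.
Proof.
move=> A0; elim: r v => [|r IH] v //.
by rewrite iterSr iterS TiT // IH.
Qed.

Lemma run_wpowD (R : fieldType) (A : R) (a : int) (r : nat) v : A != 0 -> (r < 3)%N ->
  run A (wpow delta13 (3 * a + r%:Z)) v = Zp A a (iter r (run A delta13) v).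
Proof.
move=> A0 r3; case: a => n.
  have -> : 3 * Posz n + r%:Z = Posz (3 * n + r) by rewrite PoszD PoszM.
  rewrite /wpow run_flat iterD iter3 /=; apply: eq_iter => w.
  by rewrite /D3 !run_cat.
have -> : 3 * Negz n + r%:Z = Negz (3 * n + 2 - r).
  rewrite !NegzE; lia.
rewrite /wpow run_flat.
have -> : (3 * n + 2 - r).+1 = (3 * n.+1 - r)%N by lia.
rewrite -{1}(iter_TiT r v A0) -iterD subnK; last by lia.
rewrite iter3 /Zp; apply: eq_iter => w.
by rewrite /Di3 !run_cat.
Qed.

Lemma Pg_Z (R : fieldType) (A : R) g x u : A != 0 ->
  Pg A g x (run A D3 u) = run A D3 (Pg A g x u).
Proof. by move=> A0; rewrite /Pg run_add !run_sc Z_E. Qed.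

Lemma Pg_Zi (R : fieldType) (A : R) g x u : A != 0 ->
  Pg A g x (run A Di3 u) = run A Di3 (Pg A g x u).
Proof. by move=> A0; rewrite /Pg run_add !run_sc Zi_E. Qed.

Lemma Pg_Zp (R : fieldType) (A : R) g x a u : A != 0 ->
  Pg A g x (Zp A a u) = Zp A a (Pg A g x u).
Proof.
move=> A0; case: a => n /=.
  by elim: n => //= n IH; rewrite Pg_Z // IH.
by elim: n => [|n IH] /=; rewrite Pg_Zi // IH.
Qed.

Lemma clos_iter (R : fieldType) (A : R) (f : vec R -> vec R) L M n u :
  (forall u, clos A (f u) = L * kap A * v1 u + M * (clos A u - kap A * v1 u)) ->
  (forall u, v1 (f u) = L * v1 u) ->
  clos A (iter n f u) = L ^+ n * kap A * v1 u + M ^+ n * (clos A u - kap A * v1 u)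
  /\ v1 (iter n f u) = L ^+ n * v1 u.
Proof.
move=> hc hv; elim: n => [|n [IH1 IH2]] /=.
  by split; rewrite !expr0 ?mul1r //; ring.
rewrite hc hv IH1 IH2 !exprS; split; ring.
Qed.

Lemma clos_Zp (R : fieldType) (A : R) a u : A != 0 ->
  clos A (Zp A a u) = (A ^+ 6) ^ a * kap A * v1 u + (A ^- 6) ^ a * (clos A u - kap A * v1 u).
Proof.
move=> A0; case: a => n /=.
  by case: (clos_iter n u (clos_Z (A := A) ^~ A0) (v1_Z (A := A) ^~ A0)).
case: (clos_iter n.+1 u (clos_Zi (A := A) ^~ A0) (v1_Zi (A := A) ^~ A0)) => -> _.
have e : forall z : R, z ^ Negz n = (z ^+ n.+1)^-1 by [].
by rewrite !e !exprVn invrK.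
Qed.

Lemma writhe_cat u w : writhe (u ++ w) = writhe u + writhe w.
Proof. by rewrite /writhe big_cat. Qed.

Lemma writhe_winv w : writhe (winv w) = - writhe w.
Proof.
rewrite /writhe /winv big_map big_rev -sumrN; apply: eq_bigr => l _.
by case: (l.2).
Qed.

Lemma writhe_flat n w : writhe (flatten (nseq n w)) = n%:Z * writhe w.
Proof.
elim: n => [|n IH]; first by rewrite /writhe big_nil mul0r.
by rewrite /= writhe_cat IH -addn1 PoszD mulrDl mul1r addrC.
Qed.

Lemma writhe_wpow w n : writhe (wpow w n) = n * writhe w.
Proof.
case: n => n; rewrite /wpow writhe_flat //.
by rewrite writhe_winv NegzE mulrN mulNr.
Qed.

Lemma writhe_beta k x y : writhe (beta k x y) = 2 * k + x + y.
Proof.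
rewrite /beta !writhe_cat /gpow !writhe_wpow /delta13 /writhe !big_cons !big_nil /=.
rewrite !addr0 !mulr1; ring.
Qed.

Lemma Vstar_beta (R : fieldType) (A : R) (a x y : int) (r : nat) :
  A != 0 -> - A ^+ 2 * A ^+ 2 - 1 != 0 -> (r < 3)%N ->
  let u := Pg A s2 y (Pg A s1 x (iter r (run A delta13) (delt R T1))) in
  let w := 2 * (3 * a + r%:Z) + x + y in
  Vstar A (beta (3 * a + r%:Z) x y) =
  A ^ (2 * (w - 2)) * ((- A ^+ 3) ^ (- w) *
    ((A ^+ 6) ^ a * kap A * v1 u + (A ^- 6) ^ a * (clos A u - kap A * v1 u))).
Proof.
move=> A0 h4 r3 u w.
rewrite /Vstar /jonesA writhe_beta -/w bracket_run //.
rewrite /beta !run_cat run_wpowD // !run_gpow // Pg_Zp // Pg_Zp // clos_Zp //.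
Qed.

Section Pow.
Variables (R : fieldType) (A : R).
Hypothesis A0 : A != 0.


Lemma pA_opp (m : int) : A ^ (- m) = (A ^ m)^-1.
Proof. by rewrite invr_expz. Qed.
Lemma pA_kmul (k : nat) (e : int) : A ^ ((k%:R : int) * e) = (A ^ e) ^+ k.
Proof. by rewrite natz mulrC -exprz_exp. Qed.
Lemma pA_k (k : nat) : A ^ (k%:R : int) = A ^+ k.
Proof. by rewrite natz. Qed.
Lemma pA_Pk (k : nat) : A ^ (Posz k) = A ^+ k.
Proof. by []. Qed.
Lemma bA_pos (k : nat) (e : int) : (A ^+ k) ^ e = (A ^ e) ^+ k.
Proof. by rewrite -[A ^+ k]/(A ^ (Posz k)) exprz_exp mulrC -exprz_exp. Qed.
Lemma bA_neg (k : nat) (e : int) : (A ^- k) ^ e = ((A ^ e) ^+ k)^-1.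
Proof. by rewrite exprz_inv bA_pos -invr_expz exprVn. Qed.
End Pow.
Lemma pA_add (R : fieldType) (A : R) (m n : int) : A != 0 -> A ^ (m + n) = A ^ m * A ^ n.
Proof. by move=> A0; exact: expfzDr. Qed.

Section Sgn.
Variables (R : fieldType).
Lemma sgn (z : int) : (-1 : R) ^ z = 1 \/ (-1 : R) ^ z = -1.
Proof.
case: z => n.
  change ((-1 : R) ^+ n = 1 \/ (-1 : R) ^+ n = -1).
  rewrite -signr_odd; case: (odd _); rewrite ?expr1 ?expr0; by [left|right].
change (((-1 : R) ^+ n.+1)^-1 = 1 \/ ((-1 : R) ^+ n.+1)^-1 = -1).
rewrite -signr_odd; case: (odd _); rewrite ?expr1 ?expr0 ?invrN1 ?invr1; by [left|right].
Qed.
Lemma m1_neq0 : (-1 : R) != 0. Proof. by rewrite oppr_eq0 oner_eq0. Qed.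
Lemma s_add (m n : int) : (-1 : R) ^ (m + n) = (-1) ^ m * (-1) ^ n.
Proof. exact: expfzDr m1_neq0. Qed.
Lemma s_opp (m : int) : (-1 : R) ^ (- m) = (-1) ^ m.
Proof. by rewrite -invr_expz; case: (sgn m) => ->; rewrite ?invr1 ?invrN1. Qed.
Lemma s_kmul (k : nat) (e : int) : (-1 : R) ^ ((k%:R : int) * e) = ((-1) ^ e) ^+ k.
Proof. by rewrite natz mulrC -exprz_exp. Qed.
Lemma s_k (k : nat) : (-1 : R) ^ (k%:R : int) = (-1) ^+ k.
Proof. by rewrite natz. Qed.
Lemma bN_pos (A : R) (k : nat) (e : int) : (- A ^+ k) ^ e = (-1) ^ e * (A ^ e) ^+ k.
Proof. by rewrite expNrz bA_pos. Qed.
Lemma bN_neg (A : R) (k : nat) (e : int) : (- A ^- k) ^ e = (-1) ^ e * ((A ^ e) ^+ k)^-1.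
Proof. by rewrite expNrz bA_neg. Qed.
End Sgn.

Ltac normpow A0 :=
  rewrite ?bN_pos ?bN_neg ?bA_pos ?bA_neg;
  rewrite !(pA_add A0, pA_opp, pA_kmul, pA_k, pA_Pk, s_add, s_opp, s_kmul, s_k, expr0z, expr1z).

Ltac fin R A a x y A0 h4 h4' :=
  cbv beta iota zeta delta [Pg vadd vsc Eg clos v1 ve1 ve2 ve12 ve21 delt iter];
  rewrite ?T_expl //;
  cbv beta iota zeta delta [v1 ve1 ve2 ve12 ve21];
  rewrite /Aw /cz /kap /dd /eps /Gt;
  rewrite ?bN_pos ?bN_neg ?bA_pos ?bA_neg ?s_opp ?s_add;
  do 6 (rewrite ?pA_opp ?pA_kmul ?pA_k ?pA_Pk ?s_opp ?s_add ?s_kmul ?s_k ?expr0z ?expr1z; rewrite ?pA_add //);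
  case: (sgn R x) => ->; case: (sgn R y) => ->; case: (sgn R a) => ->;
  field; by rewrite ?A0 ?h4 ?(addrC 1 (A ^+ 4)) ?h4' ?m1_neq0 ?expfz_neq0.

Lemma case_i1 (R : fieldType) (A : R) (a x y : int) :
  A != 0 -> - A ^+ 2 * A ^+ 2 - 1 != 0 -> A ^+ 4 + 1 != 0 ->
   Vstar A (beta (3 * a) x y) =
     eps R (x + y) * (1 + (A ^- 4) ^+ 2)
     + (A ^- 4) ^ (3 * a) *
       (((A ^- 4) ^ (x + y + 2) + eps R x * Gt (A ^- 4) * (A ^- 4) ^ (y + 1)
         + eps R y * Gt (A ^- 4) * (A ^- 4) ^ (x + 1) + eps R (x + y) * (A ^- 4) ^+ 2)
        / (1 + A ^- 4) ^+ 2).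
Proof.
move=> A0 h4 h4'.
have := Vstar_beta a x y A0 h4 (isT : (0 < 3)%N).
rewrite (_ : 0%:Z = 0) // addr0 => ->.
fin R A a x y A0 h4 h4'.
Qed.

Lemma case_i2 (R : fieldType) (A : R) (a x y : int) :
  A != 0 -> - A ^+ 2 * A ^+ 2 - 1 != 0 -> A ^+ 4 + 1 != 0 ->
   Vstar A (beta (3 * a) x y) =
     eps R (x + y) * (1 + (A ^- 4) ^+ 2)
     + (A ^- 4) ^ (3 * a + 2) *
       (eps R (x + y + 1) + eps R y * Aw (A ^- 4) (x - 1) + eps R x * Aw (A ^- 4) (y - 1)
        + (A ^- 4) ^+ 2 * Aw (A ^- 4) (x - 1) * Aw (A ^- 4) (y - 1)).
Proof.
move=> A0 h4 h4'.
have := Vstar_beta a x y A0 h4 (isT : (0 < 3)%N).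
rewrite (_ : 0%:Z = 0) // addr0 => ->.
fin R A a x y A0 h4 h4'.
Qed.

Lemma case_ii1 (R : fieldType) (A : R) (a x y : int) :
  A != 0 -> - A ^+ 2 * A ^+ 2 - 1 != 0 -> A ^+ 4 + 1 != 0 ->
  Vstar A (beta (3 * a + 1) x y) =
        eps R (x + y) * (1 + (A ^- 4) ^+ 2)
        - (A ^- 4) ^ (3 * a + 3) *
          (((A ^- 4) ^ (x + y - 1) + eps R (x + y)) / (1 + A ^- 4)).
Proof.
move=> A0 h4 h4'.
have := Vstar_beta a x y A0 h4 (isT : (1 < 3)%N).
rewrite (_ : 1%:Z = 1) // => ->.
fin R A a x y A0 h4 h4'.
Qed.

Lemma case_ii2 (R : fieldType) (A : R) (a x y : int) :
  A != 0 -> - A ^+ 2 * A ^+ 2 - 1 != 0 -> A ^+ 4 + 1 != 0 ->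
  Vstar A (beta (3 * a + 1) x y) =
        eps R (x + y) * (1 + (A ^- 4) ^+ 2)
        - (A ^- 4) ^ (3 * a + 3) * Aw (A ^- 4) (x + y - 1).
Proof.
move=> A0 h4 h4'.
have := Vstar_beta a x y A0 h4 (isT : (1 < 3)%N).
rewrite (_ : 1%:Z = 1) // => ->.
fin R A a x y A0 h4 h4'.
Qed.

Lemma case_iii (R : fieldType) (A : R) (a x y : int) :
  A != 0 -> - A ^+ 2 * A ^+ 2 - 1 != 0 -> A ^+ 4 + 1 != 0 ->
  Vstar A (beta (3 * a + 2) x y) =
        eps R (x + y) * (1 + (A ^- 4) ^+ 2)
        + (A ^- 4) ^ (3 * a + 3) *
          (((A ^- 4) ^ (x + y) + eps R (x - 1) * Gt (A ^- 4) * (A ^- 4) ^ y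
            + eps R (y - 1) * Gt (A ^- 4) * (A ^- 4) ^ x + eps R (x + y) * (A ^- 4) ^+ 2)
           / (1 + A ^- 4) ^+ 2).
Proof.
move=> A0 h4 h4'.
have := Vstar_beta a x y A0 h4 (isT : (2 < 3)%N).
rewrite (_ : 2%:Z = 2) // => ->.
fin R A a x y A0 h4 h4'.
Qed.

From Stdlib Require Import Setoid Morphisms.

#[local] Instance beq_equiv : Equivalence beq.
Proof. split; [exact: beq_refl | exact: beq_sym | exact: beq_trans]. Qed.

Lemma beq_cat u u' v v' : beq u u' -> beq v v' -> beq (u ++ v) (u' ++ v').
Proof.
move=> hu hv; apply: (beq_trans (v := u' ++ v)).
  by have := beq_ctx [::] v hu; rewrite /=.
by have := beq_ctx u' [::] hv; rewrite !cats0.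
Qed.

#[local] Instance cat_proper : Proper (beq ==> beq ==> beq) (@cat letter).
Proof. by move=> u u' hu v v' hv; apply: beq_cat. Qed.

Lemma winv_cat u v : winv (u ++ v) = winv v ++ winv u.
Proof. by rewrite /winv rev_cat map_cat. Qed.

Lemma winvK w : winv (winv w) = w.
Proof. rewrite /winv -map_rev revK -map_comp; elim: w => //= [[g b] w] ->; by rewrite negbK. Qed.

Lemma cancel_r w : beq (w ++ winv w) [::].
Proof.
elim: w => [|[g b] w IH] //=; first exact: beq_refl.
rewrite /winv rev_cons map_rcons -/(winv w) -cats1.
have -> : (g, b) :: w ++ winv w ++ [:: (g, ~~ b)] = [:: (g, b)] ++ (w ++ winv w) ++ [:: (g, ~~ b)].
  by rewrite /= catA.
setoid_rewrite IH; exact: beq_cancel.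
Qed.

Lemma cancel_l w : beq (winv w ++ w) [::].
Proof. by have := cancel_r (winv w); rewrite winvK. Qed.

Lemma winv_beq u v : beq u v -> beq (winv u) (winv v).
Proof.
move=> h.
transitivity (winv u ++ v ++ winv v).
  setoid_rewrite (cancel_r v); rewrite cats0; reflexivity.
transitivity (winv u ++ u ++ winv v).
  apply: beq_cat; first reflexivity. apply: beq_cat; [exact: beq_sym h | reflexivity].
rewrite catA; setoid_rewrite (cancel_l u); reflexivity.
Qed.

#[local] Instance winv_proper : Proper (beq ==> beq) winv.
Proof. by move=> u v; apply: winv_beq. Qed.

Lemma flat_beq n u v : beq u v -> beq (flatten (nseq n u)) (flatten (nseq n v)).
Proof. move=> h; elim: n => [|n IH] /=; first reflexivity. exact: beq_cat h IH. Qed.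

Lemma wpow_beq n u v : beq u v -> beq (wpow u n) (wpow v n).
Proof. case: n => n h; rewrite /wpow; apply: flat_beq => //; exact: winv_beq. Qed.

Lemma bconj_refl u : bconj u u.
Proof. exists [::]; rewrite /= cats0; reflexivity. Qed.

Lemma bconj_sym u v : bconj u v -> bconj v u.
Proof.
case=> g h; exists (winv g); rewrite winvK.
setoid_rewrite <- h.
rewrite !catA; setoid_rewrite (cancel_l g); rewrite /= -!catA; setoid_rewrite (cancel_l g).
by rewrite cats0; reflexivity.
Qed.

Lemma bconj_trans u v w : bconj u v -> bconj v w -> bconj u w.
Proof.
case=> g1 h1 [g2 h2]; exists (g2 ++ g1).
have -> : (g2 ++ g1) ++ u ++ winv (g2 ++ g1) = g2 ++ (g1 ++ u ++ winv g1) ++ winv g2.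
  by rewrite winv_cat !catA.
setoid_rewrite h1; exact: h2.
Qed.

Lemma bconj_beq u v : beq u v -> bconj u v.
Proof. by move=> h; exists [::]; rewrite /= cats0. Qed.

#[local] Instance bconj_proper : Proper (beq ==> beq ==> iff) bconj.
Proof.
move=> u u' hu v v' hv; split => h.
  apply: bconj_trans (bconj_beq (beq_sym hu)) _ => //.
  apply: bconj_trans h (bconj_beq hv).
apply: bconj_trans (bconj_beq hu) _.
by apply: bconj_trans h (bconj_beq (beq_sym hv)).
Qed.

Definition itw (c a b : word) : Prop := beq (c ++ a) (b ++ c).

Lemma itw_inv c a b : itw c a b -> itw c (winv a) (winv b).
Proof.
rewrite /itw => h.
transitivity ((winv b ++ b) ++ c ++ winv a).
  setoid_rewrite (cancel_l b); reflexivity.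
rewrite (_ : (winv b ++ b) ++ c ++ winv a = winv b ++ (b ++ c) ++ winv a); last by rewrite !catA.
setoid_rewrite <- h.
rewrite (_ : winv b ++ (c ++ a) ++ winv a = (winv b ++ c) ++ (a ++ winv a)); last by rewrite !catA.
setoid_rewrite (cancel_r a); rewrite cats0; reflexivity.
Qed.

Lemma itw_cat c a b a' b' : itw c a b -> itw c a' b' -> itw c (a ++ a') (b ++ b').
Proof.
rewrite /itw => h h'; rewrite catA; setoid_rewrite h; rewrite -catA; setoid_rewrite h'.
rewrite catA; reflexivity.
Qed.

Lemma itw_nil c : itw c [::] [::].
Proof. by rewrite /itw cats0; reflexivity. Qed.

Lemma itw_flat c a b n : itw c a b -> itw c (flatten (nseq n a)) (flatten (nseq n b)).
Proof. by move=> h; elim: n => [|n IH] /=; [exact: itw_nil | exact: itw_cat]. Qed.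

Lemma itw_wpow c a b n : itw c a b -> itw c (wpow a n) (wpow b n).
Proof. by case: n => n h; rewrite /wpow; apply: itw_flat => //; apply: itw_inv. Qed.

Lemma itw_comp c1 c2 a m b : itw c2 a m -> itw c1 m b -> itw (c1 ++ c2) a b.
Proof.
rewrite /itw => h2 h1; rewrite -catA; setoid_rewrite h2; rewrite catA; setoid_rewrite h1.
rewrite catA; reflexivity.
Qed.

Lemma itw_beqc c c' a b : beq c c' -> itw c a b -> itw c' a b.
Proof. by rewrite /itw => h; setoid_rewrite h. Qed.

Lemma itw_cinv c a : itw c a a -> itw (winv c) a a.
Proof.
rewrite /itw => h.
transitivity (winv c ++ (a ++ c) ++ winv c).
  rewrite -!catA; setoid_rewrite (cancel_r c); rewrite cats0; reflexivity.
setoid_rewrite <- h; rewrite !catA; setoid_rewrite (cancel_l c); reflexivity.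
Qed.

Lemma itw_cflat c a n : itw c a a -> itw (flatten (nseq n c)) a a.
Proof.
move=> h; elim: n => [|n IH] /=; first by rewrite /itw cats0; reflexivity.
exact: itw_comp IH h.
Qed.

Lemma itw_cwpow c a n : itw c a a -> itw (wpow c n) a a.
Proof. by case: n => n h; rewrite /wpow; apply: itw_cflat => //; apply: itw_cinv. Qed.

Lemma flat_nseqS (T : Type) n (w : seq T) : flatten (nseq n.+1 w) = flatten (nseq n w) ++ w.
Proof.
elim: n => [|n IH]; first by rewrite /= cats0.
change (w ++ flatten (nseq n.+1 w) = flatten (nseq n.+1 w) ++ w).
by rewrite {1}IH /= catA.
Qed.

Lemma wpow_S w n : beq (wpow w (n + 1)) (wpow w n ++ w).
Proof.
case: n => n.
  rewrite -PoszD addn1 /wpow flat_nseqS; reflexivity.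
case: n => [|n].
  rewrite /= cats0; symmetry; exact: cancel_l.
have -> : Negz n.+1 + 1 = Negz n by rewrite !NegzE; ring.
rewrite /wpow [flatten (nseq n.+2 _)]flat_nseqS -catA; setoid_rewrite (cancel_l w); rewrite cats0; reflexivity.
Qed.

Lemma wpow_P w n : beq (wpow w (n - 1)) (wpow w n ++ winv w).
Proof.
have h := wpow_S w (n - 1); rewrite subrK in h.
setoid_rewrite h; rewrite -catA; setoid_rewrite (cancel_r w); rewrite cats0; reflexivity.
Qed.

Lemma wpow_add w m n : beq (wpow w (m + n)) (wpow w m ++ wpow w n).
Proof.
case: n => n.
  elim: n => [|n IH]; first by rewrite addr0 /= cats0; reflexivity.
  rewrite -addn1 PoszD addrA; setoid_rewrite (wpow_S w (m + n)); setoid_rewrite IH.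
  setoid_rewrite (wpow_S w n); rewrite catA; reflexivity.
elim: n => [|n IH].
  rewrite (_ : Negz 0 = - 1) // wpow_P /= cats0; reflexivity.
rewrite (_ : Negz n.+1 = Negz n - 1); last by rewrite !NegzE; ring.
rewrite addrA; setoid_rewrite (wpow_P w (m + Negz n)); setoid_rewrite IH.
setoid_rewrite (wpow_P w (Negz n)); rewrite catA; reflexivity.
Qed.

Definition L1 : word := [:: (s1, true)].
Definition L2 : word := [:: (s2, true)].
Definition dl : word := [:: (s1, true); (s2, true); (s1, true)].
Definition dl' : word := [:: (s2, true); (s1, true); (s2, true)].

Lemma braid' : beq dl' dl.
Proof. exact: beq_sym beq_braid. Qed.

Lemma I_D : itw delta13 L1 L2.
Proof. exact: beq_braid. Qed.

Lemma I_d12 : itw dl L1 L2.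
Proof.
rewrite /itw (_ : L2 ++ dl = dl' ++ L1) //.
by setoid_rewrite braid'; reflexivity.
Qed.

Lemma I_d21 : itw dl L2 L1.
Proof.
rewrite /itw (_ : dl ++ L2 = L1 ++ dl') //.
by setoid_rewrite braid'; reflexivity.
Qed.

Lemma central_dd w : itw (dl ++ dl) w w.
Proof.
elim: w => [|[g b] w IH]; first exact: itw_nil.
rewrite -cat1s; apply: itw_cat => //.
have hg : itw (dl ++ dl) [:: (g, true)] [:: (g, true)].
  case: g.
    exact: itw_comp I_d12 I_d21.
  exact: itw_comp I_d21 I_d12.
case: b => //.
exact: (itw_inv hg).
Qed.

Lemma D3_dd : beq (delta13 ++ delta13 ++ delta13) (dl ++ dl).
Proof.
rewrite (_ : delta13 ++ delta13 ++ delta13 = dl ++ dl') //.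
by setoid_rewrite braid'; reflexivity.
Qed.

Lemma flat_nseq_mul (T : Type) n (w : seq T) :
  flatten (nseq (3 * n) w) = flatten (nseq n (w ++ w ++ w)).
Proof. elim: n => [|n IH] //. by rewrite mulnS /= IH !catA. Qed.

Lemma wpow3 a : wpow delta13 (3 * a) = wpow (delta13 ++ delta13 ++ delta13) a.
Proof.
case: a => n.
  by rewrite -PoszM /wpow flat_nseq_mul.
have -> : 3 * Negz n = Negz (3 * n).+2 by rewrite !NegzE; lia.
rewrite /wpow !winv_cat -catA (_ : (3 * n).+3 = 3 * n.+1)%N ?flat_nseq_mul //; lia.
Qed.

Lemma central_C a w : itw (wpow delta13 (3 * a)) w w.
Proof.
rewrite wpow3; apply: (itw_beqc (c := wpow (dl ++ dl) a)).
  exact: wpow_beq (beq_sym D3_dd).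
exact: itw_cwpow (central_dd w).
Qed.

Lemma rot_c c u v : itw c v v -> bconj (c ++ u ++ v) (c ++ v ++ u).
Proof.
move=> h; exists v.
rewrite (_ : v ++ (c ++ u ++ v) ++ winv v = (v ++ c) ++ u ++ (v ++ winv v)); last by rewrite !catA.
setoid_rewrite (cancel_r v); rewrite cats0.
have h' : beq (v ++ c) (c ++ v) by exact: beq_sym h.
setoid_rewrite h'; rewrite catA; reflexivity.
Qed.

Lemma conj_itw g u u' : itw g u u' -> bconj u u'.
Proof.
move=> h; rewrite /itw in h; exists g; rewrite catA; setoid_rewrite h.
rewrite -catA; setoid_rewrite (cancel_r g); rewrite cats0; reflexivity.
Qed.

Lemma gpow_add g m n : beq (gpow g (m + n)) (gpow g m ++ gpow g n).
Proof. exact: wpow_add. Qed.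

Lemma gpow1 g : gpow g 1 = [:: (g, true)].
Proof. by []. Qed.

Lemma conj_ii a x y : bconj (beta (3 * a + 1) x y) (beta (3 * a) (x + y + 1) 1).
Proof.
have hC : forall w, itw (wpow delta13 (3 * a)) w w := central_C a.
move: hC; set C := wpow delta13 (3 * a) => hC.
rewrite /beta -/C.
have e1 : beq (wpow delta13 (3 * a + 1) ++ gpow s1 x ++ gpow s2 y)
              (C ++ (gpow s2 x ++ L1) ++ gpow s2 (1 + y)).
  setoid_rewrite (wpow_add delta13 (3 * a) 1).
  rewrite -/C (_ : wpow delta13 1 = delta13) //.
  rewrite -catA (catA delta13).
  have hI : beq (delta13 ++ gpow s1 x) (gpow s2 x ++ delta13) := itw_wpow x I_D.
  setoid_rewrite hI.
  have hy : beq (L2 ++ gpow s2 y) (gpow s2 (1 + y)).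
    by symmetry; setoid_rewrite (gpow_add s2 1 y); reflexivity.
  rewrite (_ : C ++ (gpow s2 x ++ delta13) ++ gpow s2 y = C ++ (gpow s2 x ++ L1) ++ (L2 ++ gpow s2 y));
    last by rewrite -!catA.
  setoid_rewrite hy; reflexivity.
setoid_rewrite e1.
apply: (bconj_trans (rot_c _ (hC _))).
rewrite (_ : C ++ gpow s2 (1 + y) ++ gpow s2 x ++ L1 = C ++ (gpow s2 (1 + y) ++ gpow s2 x) ++ L1);
  last by rewrite !catA.
setoid_rewrite <- (gpow_add s2 (1 + y) x).
rewrite (_ : 1 + y + x = x + y + 1); last by ring.
apply: (conj_itw (g := dl)).
apply: itw_cat; first exact: beq_sym (hC dl).
apply: itw_cat; first exact: itw_wpow _ I_d21.
exact: I_d12.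
Qed.

Lemma bconj_eqL u u' v : u = u' -> bconj u' v -> bconj u v.
Proof. by move=> ->. Qed.

Definition r3 : word := [:: (s2, true); (s1, true); (s1, true)].

Lemma conj_iii_src a x y :
  bconj (beta (3 * a + 2) x y) (wpow delta13 (3 * a) ++ r3 ++ gpow s2 x ++ gpow s1 (y + 1)).
Proof.
have hC : forall w, itw (wpow delta13 (3 * a)) w w := central_C a.
move: hC; set C := wpow delta13 (3 * a) => hC.
rewrite /beta.
setoid_rewrite (wpow_add delta13 (3 * a) 2).
rewrite -/C (_ : wpow delta13 2 = L1 ++ dl') //.
apply: (bconj_eqL (u' := C ++ L1 ++ dl' ++ gpow s1 x ++ gpow s2 y)); first by rewrite -?catA.
setoid_rewrite braid'.
have hA : beq (dl ++ gpow s1 x) (gpow s2 x ++ dl) := itw_wpow x I_d12.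
have hB : beq (dl ++ gpow s2 y) (gpow s1 y ++ dl) := itw_wpow y I_d21.
apply: (bconj_eqL (u' := C ++ L1 ++ (dl ++ gpow s1 x) ++ gpow s2 y)); first by rewrite -?catA.
setoid_rewrite hA.
apply: (bconj_eqL (u' := C ++ L1 ++ gpow s2 x ++ (dl ++ gpow s2 y))); first by rewrite -?catA.
setoid_rewrite hB.
apply: (bconj_eqL (u' := C ++ (L1 ++ gpow s2 x ++ gpow s1 y) ++ dl)); first by rewrite -?catA.
apply: (bconj_trans (rot_c _ (hC _))).
apply: (bconj_eqL (u' := C ++ L1 ++ (r3 ++ gpow s2 x ++ gpow s1 y))); first by rewrite -?catA.
apply: (bconj_trans (rot_c _ (hC _))).
have hy : beq (gpow s1 y ++ L1) (gpow s1 (y + 1)) := beq_sym (wpow_S L1 y).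
apply: (bconj_eqL (u' := C ++ r3 ++ gpow s2 x ++ (gpow s1 y ++ L1))); first by rewrite -?catA.
setoid_rewrite hy; exact: bconj_refl.
Qed.

Lemma conj_iii_tgt a x y :
  bconj (beta (3 * a + 3) (x - 1) (y - 1)) (wpow delta13 (3 * a) ++ r3 ++ gpow s2 x ++ gpow s1 (y + 1)).
Proof.
have hC : forall w, itw (wpow delta13 (3 * a)) w w := central_C a.
move: hC; set C := wpow delta13 (3 * a) => hC.
rewrite /beta.
setoid_rewrite (wpow_add delta13 (3 * a) 3).
rewrite -/C (_ : wpow delta13 3 = dl ++ dl') //.
setoid_rewrite braid'.
have hA : beq (dl ++ gpow s1 (x - 1)) (gpow s2 (x - 1) ++ dl) := itw_wpow _ I_d12.
have hB : beq (dl ++ gpow s2 (y - 1)) (gpow s1 (y - 1) ++ dl) := itw_wpow _ I_d21.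
apply: (bconj_eqL (u' := C ++ dl ++ (dl ++ gpow s1 (x - 1)) ++ gpow s2 (y - 1))); first by rewrite -?catA.
setoid_rewrite hA.
apply: (bconj_eqL (u' := C ++ dl ++ gpow s2 (x - 1) ++ (dl ++ gpow s2 (y - 1)))); first by rewrite -?catA.
setoid_rewrite hB.
apply: (bconj_eqL (u' := C ++ (dl ++ gpow s2 (x - 1) ++ gpow s1 (y - 1)) ++ dl)); first by rewrite -?catA.
apply: (bconj_trans (rot_c _ (hC _))).
have hdd : beq (dl ++ dl) (dl ++ dl') by setoid_rewrite braid'; reflexivity.
apply: (bconj_eqL (u' := C ++ (dl ++ dl) ++ gpow s2 (x - 1) ++ gpow s1 (y - 1))); first by rewrite -?catA.
setoid_rewrite hdd.
have hx : beq (L2 ++ gpow s2 (x - 1)) (gpow s2 x).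
  symmetry; rewrite -{1}(subrK 1 x) addrC; exact: gpow_add.
apply: (bconj_eqL (u' := C ++ L1 ++ ([:: (s2, true); (s1, true); (s2, true); (s1, true)]
                                    ++ (L2 ++ gpow s2 (x - 1)) ++ gpow s1 (y - 1))));
  first by rewrite -?catA.
setoid_rewrite hx.
apply: (bconj_trans (rot_c _ (hC _))).
have hy1 : beq (gpow s1 (y - 1) ++ L1) (gpow s1 y).
  have h := wpow_S L1 (y - 1); rewrite subrK in h; exact: beq_sym h.
apply: (bconj_eqL (u' := C ++ dl' ++ L1 ++ gpow s2 x ++ (gpow s1 (y - 1) ++ L1)));
  first by rewrite -?catA.
setoid_rewrite hy1; setoid_rewrite braid'.
apply: (bconj_eqL (u' := C ++ L1 ++ (r3 ++ gpow s2 x ++ gpow s1 y))); first by rewrite -?catA.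
apply: (bconj_trans (rot_c _ (hC _))).
have hy : beq (gpow s1 y ++ L1) (gpow s1 (y + 1)) := beq_sym (wpow_S L1 y).
apply: (bconj_eqL (u' := C ++ r3 ++ gpow s2 x ++ (gpow s1 y ++ L1))); first by rewrite -?catA.
setoid_rewrite hy; exact: bconj_refl.
Qed.

Lemma conj_iii a x y : bconj (beta (3 * a + 2) x y) (beta (3 * a + 3) (x - 1) (y - 1)).
Proof. exact: bconj_trans (conj_iii_src a x y) (bconj_sym (conj_iii_tgt a x y)). Qed.


Theorem corollary2p17 (R : fieldType) (A : R) (a x y : int) :
  A != 0 -> 1 + A ^- 4 != 0 ->
  [/\
   (* (i) *)
   Vstar A (beta (3 * a) x y) =
     eps R (x + y) * (1 + (A ^- 4) ^+ 2)
     + (A ^- 4) ^ (3 * a) *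
       (((A ^- 4) ^ (x + y + 2) + eps R x * Gt (A ^- 4) * (A ^- 4) ^ (y + 1)
         + eps R y * Gt (A ^- 4) * (A ^- 4) ^ (x + 1) + eps R (x + y) * (A ^- 4) ^+ 2)
        / (1 + A ^- 4) ^+ 2)
   /\
   Vstar A (beta (3 * a) x y) =
     eps R (x + y) * (1 + (A ^- 4) ^+ 2)
     + (A ^- 4) ^ (3 * a + 2) *
       (eps R (x + y + 1) + eps R y * Aw (A ^- 4) (x - 1) + eps R x * Aw (A ^- 4) (y - 1)
        + (A ^- 4) ^+ 2 * Aw (A ^- 4) (x - 1) * Aw (A ^- 4) (y - 1)),
   (* (ii) *)
   bconj (beta (3 * a + 1) x y) (beta (3 * a) (x + y + 1) 1)
   /\ Vstar A (beta (3 * a + 1) x y) =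
        eps R (x + y) * (1 + (A ^- 4) ^+ 2)
        - (A ^- 4) ^ (3 * a + 3) *
          (((A ^- 4) ^ (x + y - 1) + eps R (x + y)) / (1 + A ^- 4))
   /\ Vstar A (beta (3 * a + 1) x y) =
        eps R (x + y) * (1 + (A ^- 4) ^+ 2)
        - (A ^- 4) ^ (3 * a + 3) * Aw (A ^- 4) (x + y - 1) &
   (* (iii) *)
   bconj (beta (3 * a + 2) x y) (beta (3 * a + 3) (x - 1) (y - 1))
   /\ Vstar A (beta (3 * a + 2) x y) =
        eps R (x + y) * (1 + (A ^- 4) ^+ 2)
        + (A ^- 4) ^ (3 * a + 3) *
          (((A ^- 4) ^ (x + y) + eps R (x - 1) * Gt (A ^- 4) * (A ^- 4) ^ y
            + eps R (y - 1) * Gt (A ^- 4) * (A ^- 4) ^ x + eps R (x + y) * (A ^- 4) ^+ 2)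
           / (1 + A ^- 4) ^+ 2)].
Proof.
move=> A0 hA.
have h4' : A ^+ 4 + 1 != 0.
  have -> : A ^+ 4 + 1 = A ^+ 4 * (1 + A ^- 4) by field.
  by rewrite mulf_neq0 // expf_neq0.
have h4 : - A ^+ 2 * A ^+ 2 - 1 != 0.
  have -> : - A ^+ 2 * A ^+ 2 - 1 = - (A ^+ 4 + 1) by ring.
  by rewrite oppr_eq0.
split.
- split; [exact: case_i1 | exact: case_i2].
- split; first exact: conj_ii.
  split; [exact: case_ii1 | exact: case_ii2].
- split; [exact: conj_iii | exact: case_iii].
Qed.
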